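(* Let $N, M, K$ be positive integers, let $\mathbf{a} \in \mathbb{C}^{N}$ and $\mathbf{B} \in \mathbb{C}^{N \times M}$ be constants, and write $\mathbf{A} = \mathrm{diag}(\mathbf{a})$. For a diagonal matrix $\mathbf{X} \in \mathbb{C}^{N \times N}$ write $\mathbf{x} = \mathrm{diag}(\mathbf{X}) \in \mathbb{C}^N$ for its vector of diagonal entries. Fix a diagonal matrix $\mathbf{X}_0 \in \mathbb{C}^{N\times N}$ with $\mathbf{x}_0 = \mathrm{diag}(\mathbf{X}_0)$ and a matrix $\mathbf{Y}_0 \in \mathbb{C}^{M \times K}$. Define, for diagonal $\mathbf{X} \in \mathbb{C}^{N\times N}$ and $\mathbf{Y} \in \mathbb{C}^{M \times K}$, \[ \begin{aligned} \Omega_{\mathbf{a},\mathbf{B}}(\mathbf{X},\mathbf{X}_0,\mathbf{Y},\mathbf{Y}_0) \triangleq\ & \Re\Big\{ \big(\mathbf{Y}_0\mathbf{Y}_0^{\mathsf H}\mathbf{B}^{\mathsf H}\mathbf{A}^*\mathbf{x}_0^* + \mathbf{B}^{\mathsf H}\mathbf{A}^*\mathbf{x}_0^*\big)^{\mathsf H}\big(\mathbf{Y}\mathbf{Y}_0^{\mathsf H}\mathbf{B}^{\mathsf H}\mathbf{A}^*\mathbf{x}_0^* + \mathbf{B}^{\mathsf H}\mathbf{A}^*\mathbf{x}^*\big)\Big\} \\ & - \tfrac{1}{2}\big\|\mathbf{Y}\mathbf{Y}_0^{\mathsf H}\mathbf{B}^{\mathsf H}\mathbf{A}^*\mathbf{x}_0^*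 - \mathbf{B}^{\mathsf H}\mathbf{A}^*\mathbf{x}^*\big\|_2^2 - \big\|\mathbf{Y}_0^{\mathsf H}\mathbf{B}^{\mathsf H}\mathbf{A}^*\mathbf{x}_0^*\big\|_2^2 \\ & - \tfrac{1}{2}\big\|\mathbf{Y}_0\mathbf{Y}_0^{\mathsf H}\mathbf{B}^{\mathsf H}\mathbf{A}^*\mathbf{x}_0^* + \mathbf{B}^{\mathsf H}\mathbf{A}^*\mathbf{x}_0^*\big\|_2^2 . \end{aligned} \] Then $\Omega_{\mathbf{a},\mathbf{B}}(\cdot,\mathbf{X}_0,\cdot,\mathbf{Y}_0)$ is jointly concave in $(\mathbf{X},\mathbf{Y})$ (viewed as a real-valued function of the real and imaginary parts of the entries of $\mathbf{x}$ and $\mathbf{Y}$), and for every diagonal $\mathbf{X} \in \mathbb{C}^{N\times N}$ and every $\mathbf{Y} \in \mathbb{C}^{M\times K}$, \[ \|\mathbf{a}^{\mathsf T}\mathbf{X}\mathbf{B}\mathbf{Y}\|_2^2 \ \ge\ \Omega_{\mathbf{a},\mathbf{B}}(\mathbf{X},\mathbf{X}_0,\mathbf{Y},\mathbf{Y}_0). \]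
   Context: $(\cdot)^*$ denotes entrywise complex conjugation, $(\cdot)^{\mathsf T}$ transpose, $(\cdot)^{\mathsf H}$ conjugate transpose, $\|\cdot\|_2$ the Euclidean norm, $\Re\{\cdot\}$ the real part. For a vector $\mathbf{v}$, $\mathrm{diag}(\mathbf{v})$ is the diagonal matrix with $\mathbf{v}$ on its diagonal; for a diagonal matrix, $\mathrm{diag}(\cdot)$ is the vector of its diagonal entries. (In the paper this bound is written compactly via $\boldsymbol{\alpha}_{\mathbf{a},\mathbf{B}}(\mathbf{Z}_1,\mathbf{Z}_2,\mathbf{Z}_3,\mathbf{Z}_4) = \mathbf{Z}_3\mathbf{Z}_4^{\mathsf H}\mathbf{B}^{\mathsf H}\mathrm{diag}(\mathbf{a}^* )\mathrm{diag}(\mathbf{Z}_2^* ) + \mathbf{B}^{\mathsf H}\mathrm{diag}(\mathbf{a}^* )\mathrm{diag}(\mathbf{Z}_1^* )$ as $\Re\{\boldsymbol{\alpha}^{\mathsf H}(\mathbf{X}_0,\mathbf{X}_0,\mathbf{Y}_0,\mathbf{Y}_0)\boldsymbol{\alpha}(\mathbf{X},\mathbf{X}_0,\mathbf{Y},\mathbf{Y}_0)\} - \tfrac12\|\boldsymbol{\alpha}(-\mathbf{X},\mathbf{X}_0,\mathbf{Y},\mathbf{Y}_0)\|_2^2 - \|\boldsymbol{\alpha}(\mathbf{0},\mathbf{X}_0,\mathbf{I},\mathbf{Y}_0)\|_2^2 - \tfrac12\|\boldsymbol{\alpha}(\mathbf{X}_0,\mathbf{X}_0,\mathbf{Y}_0,\mathbf{Y}_0)\|_2^2$,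 which equals the expression above.) *)

(* Defs.v *)
From HB Require Import structures.
From mathcomp Require Import all_boot all_order all_algebra.
From mathcomp Require Import complex.
Set Implicit Arguments. Unset Strict Implicit. Unset Printing Implicit Defensive.
Import Order.TTheory GRing.Theory Num.Theory.
Local Open Scope ring_scope.

Section Defs.
Variable R : rcfType.
Local Notation C := (complex R).

Definition conjm m n (A : 'M[C]_(m, n)) : 'M[C]_(m, n) := map_mx (@conjc R) A.
Definition hmx m n (A : 'M[C]_(m, n)) : 'M[C]_(n, m) := (conjm A)^T.
Definition reC (z : C) : R := complex.Re z.
Definition sqmod (z : C) : R := complex.Re z ^+ 2 + complex.Im z ^+ 2.
Definition sqnorm m n (A : 'M[C]_(m, n)) : R := \sum_i \sum_j sqmod (A i j).
Definition diagv n (X : 'M[C]_n) : 'cV[C]_n := \col_i X i i.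
Definition diagm n (v : 'cV[C]_n) : 'M[C]_n := diag_mx v^T.

Definition Omega N M K (a : 'cV[C]_N) (B : 'M[C]_(N, M))
  (X X0 : 'M[C]_N) (Y Y0 : 'M[C]_(M, K)) : R :=
  let A := diagm a in
  let x := diagv X in
  let x0 := diagv X0 in
  let c0 := hmx B *m conjm A *m conjm x0 in
  let c := hmx B *m conjm A *m conjm x in
  let u0 := Y0 *m hmx Y0 *m c0 + c0 in
  let u := Y *m hmx Y0 *m c0 + c in
  reC ((hmx u0 *m u) 0 0)
  - (sqnorm (Y *m hmx Y0 *m c0 - c)) / 2%:R
  - sqnorm (hmx Y0 *m c0)
  - (sqnorm u0) / 2%:R.

End Defs.

(* Main.v *)
Require Import Defs.
From HB Require Import structures.
From mathcomp Require Import all_boot all_order all_algebra.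
From mathcomp Require Import complex.
From mathcomp Require Import ring lra.
Set Implicit Arguments. Unset Strict Implicit. Unset Printing Implicit Defensive.
Import Order.TTheory GRing.Theory Num.Theory.
Local Open Scope ring_scope.

Section H.
Variable R : rcfType.
Local Notation C := (complex R).

Lemma ReD (x y : C) : complex.Re (x + y) = complex.Re x + complex.Re y.
Proof. by case: x; case: y. Qed.
Lemma ImD (x y : C) : complex.Im (x + y) = complex.Im x + complex.Im y.
Proof. by case: x; case: y. Qed.
Lemma ReN (x : C) : complex.Re (- x) = - complex.Re x.
Proof. by case: x. Qed.
Lemma ImN (x : C) : complex.Im (- x) = - complex.Im x.
Proof. by case: x. Qed.
Lemma ReZ (t : R) (x : C) : complex.Re ((t%:C)%C * x) = t * complex.Re x.
Proof. case: x => a b /=; ring. Qed.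
Lemma ImZ (t : R) (x : C) : complex.Im ((t%:C)%C * x) = t * complex.Im x.
Proof. case: x => a b /=; ring. Qed.
Lemma Re0 : complex.Re (0 : C) = 0. Proof. by []. Qed.
Lemma ReJM (x y : C) : complex.Re ((x^*)%C * y) =
  complex.Re x * complex.Re y + complex.Im x * complex.Im y.
Proof. case: x => a b; case: y => c d /=; ring. Qed.

Definition ip m n (A B : 'M[C]_(m, n)) : R :=
  \sum_i \sum_j (complex.Re (A i j) * complex.Re (B i j)
                 + complex.Im (A i j) * complex.Im (B i j)).

Lemma ipDl m n (A B D : 'M[C]_(m, n)) : ip (A + B) D = ip A D + ip B D.
Proof.
rewrite /ip -big_split; apply: eq_bigr => i _; rewrite -big_split.
apply: eq_bigr => j _; rewrite !mxE ReD ImD /=; ring.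
Qed.
Lemma ipC m n (A B : 'M[C]_(m, n)) : ip A B = ip B A.
Proof.
rewrite /ip; apply: eq_bigr => i _; apply: eq_bigr => j _; ring.
Qed.
Lemma ipDr m n (A B D : 'M[C]_(m, n)) : ip D (A + B) = ip D A + ip D B.
Proof. by rewrite ipC ipDl !(ipC D). Qed.
Lemma ipNl m n (A D : 'M[C]_(m, n)) : ip (- A) D = - ip A D.
Proof.
rewrite /ip -sumrN; apply: eq_bigr => i _; rewrite -sumrN.
apply: eq_bigr => j _; rewrite !mxE ReN ImN; ring.
Qed.
Lemma ipNr m n (A D : 'M[C]_(m, n)) : ip D (- A) = - ip D A.
Proof. by rewrite ipC ipNl ipC. Qed.
Lemma ipZl m n t (A D : 'M[C]_(m, n)) : ip ((t%:C)%C *: A) D = t * ip A D.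
Proof.
rewrite /ip mulr_sumr; apply: eq_bigr => i _; rewrite mulr_sumr.
apply: eq_bigr => j _; rewrite !mxE ReZ ImZ; ring.
Qed.
Lemma ipZr m n t (A D : 'M[C]_(m, n)) : ip D ((t%:C)%C *: A) = t * ip D A.
Proof. by rewrite ipC ipZl ipC. Qed.
Lemma sqnorm_ip m n (A : 'M[C]_(m, n)) : sqnorm A = ip A A.
Proof.
rewrite /sqnorm /ip; apply: eq_bigr => i _; apply: eq_bigr => j _.
by rewrite /sqmod !expr2.
Qed.
Lemma ip_ge0 m n (A : 'M[C]_(m, n)) : 0 <= ip A A.
Proof.
rewrite /ip; apply: sumr_ge0 => i _; apply: sumr_ge0 => j _.
by rewrite addr_ge0 // -expr2 sqr_ge0.
Qed.

Lemma hmx_ip m (u v : 'cV[C]_m) : reC ((hmx u *m v) 0 0) = ip u v.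
Proof.
rewrite /reC /ip mxE (big_morph _ ReD Re0); apply: eq_bigr => i _.
by rewrite big_ord1 !mxE ReJM.
Qed.

Lemma hmxM m n p (A : 'M[C]_(m, n)) (B : 'M[C]_(n, p)) :
  hmx (A *m B) = hmx B *m hmx A.
Proof. by rewrite /hmx /conjm map_mxM trmx_mul. Qed.

Lemma sqnorm_hmx m n (A : 'M[C]_(m, n)) : sqnorm (hmx A) = sqnorm A.
Proof.
rewrite /sqnorm exchange_big; apply: eq_bigr => i _; apply: eq_bigr => j _.
by rewrite /hmx /conjm !mxE /sqmod; case: (A i j) => a b /=; rewrite sqrrN.
Qed.


Lemma conjmM m n p (A : 'M[C]_(m, n)) (B : 'M[C]_(n, p)) :
  conjm (A *m B) = conjm A *m conjm B.
Proof. by rewrite /conjm map_mxM. Qed.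

Lemma hmx_aX n (a : 'cV[C]_n) (X : 'M[C]_n) : is_diag_mx X ->
  hmx (a^T *m X) = conjm (diagm a) *m conjm (diagv X).
Proof.
move=> /is_diag_mxP hX.
rewrite -conjmM /hmx /conjm map_trmx; congr map_mx.
apply/matrixP => i j; rewrite /diagm mul_diag_mx !mxE (bigD1 i) //= big1.
  by rewrite addr0 !mxE (ord1 j).
by move=> k /negPf kn; rewrite hX ?mulr0 //; rewrite -(inj_eq val_inj) in kn; rewrite kn.
Qed.

Lemma diagv_comb n (t s : R) (X1 X2 : 'M[C]_n) :
  diagv ((t%:C)%C *: X1 + (s%:C)%C *: X2) = (t%:C)%C *: diagv X1 + (s%:C)%C *: diagv X2.
Proof. by apply/matrixP => i j; rewrite !mxE. Qed.

Lemma conjm_comb m n (t s : R) (X1 X2 : 'M[C]_(m, n)) :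
  conjm ((t%:C)%C *: X1 + (s%:C)%C *: X2) = (t%:C)%C *: conjm X1 + (s%:C)%C *: conjm X2.
Proof.
apply/matrixP => i j; rewrite !mxE; case: (X1 i j) => a b; case: (X2 i j) => c d.
by apply/eqP; rewrite eq_complex /=; apply/andP; split; apply/eqP; ring.
Qed.

Lemma is_diag_comb n (t s : R) (X1 X2 : 'M[C]_n) : is_diag_mx X1 -> is_diag_mx X2 ->
  is_diag_mx ((t%:C)%C *: X1 + (s%:C)%C *: X2).
Proof.
move=> /is_diag_mxP h1 /is_diag_mxP h2; apply/is_diag_mxP => i j ij.
by rewrite !mxE h1 // h2 // !mulr0 addr0.
Qed.

Lemma key m (u0 P1 P2 Q1 Q2 : 'cV[C]_m) (k1 k2 t : R) : 0 <= t <= 1 ->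
  t * (ip u0 (P1 + Q1) - ip (P1 - Q1) (P1 - Q1) / 2%:R - k1 - k2)
  + (1 - t) * (ip u0 (P2 + Q2) - ip (P2 - Q2) (P2 - Q2) / 2%:R - k1 - k2)
  <= ip u0 ((t%:C)%C *: P1 + ((1 - t)%:C)%C *: P2 + ((t%:C)%C *: Q1 + ((1 - t)%:C)%C *: Q2))
     - ip ((t%:C)%C *: P1 + ((1 - t)%:C)%C *: P2 - ((t%:C)%C *: Q1 + ((1 - t)%:C)%C *: Q2))
          ((t%:C)%C *: P1 + ((1 - t)%:C)%C *: P2 - ((t%:C)%C *: Q1 + ((1 - t)%:C)%C *: Q2)) / 2%:R
     - k1 - k2.
Proof.
move=> /andP [t0 t1].
have e1 : (t%:C)%C *: P1 + ((1 - t)%:C)%C *: P2 + ((t%:C)%C *: Q1 + ((1 - t)%:C)%C *: Q2)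
  = (t%:C)%C *: (P1 + Q1) + ((1 - t)%:C)%C *: (P2 + Q2).
  by rewrite !scalerDr addrACA.
have e2 : (t%:C)%C *: P1 + ((1 - t)%:C)%C *: P2 - ((t%:C)%C *: Q1 + ((1 - t)%:C)%C *: Q2)
  = (t%:C)%C *: (P1 - Q1) + ((1 - t)%:C)%C *: (P2 - Q2).
  by rewrite !scalerBr opprD addrACA.
rewrite e1 e2.
move: (P1 + Q1) (P2 + Q2) (P1 - Q1) (P2 - Q2) => s1 s2 d1 d2.
have h := ip_ge0 (d1 - d2).
rewrite !(ipDl, ipDr, ipNl, ipNr, ipZl, ipZr) in h *.
rewrite (ipC d2 d1) in h *.
have t1' : 0 <= 1 - t by rewrite subr_ge0.
have h2 := mulr_ge0 (mulr_ge0 t0 t1') h.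
nra.
Qed.


Lemma key2 m k (u0 P c : 'cV[C]_m) (w s : 'cV[C]_k) : ip P c = ip w s ->
  ip u0 (P + c) - ip (P - c) (P - c) / 2%:R - ip w w - ip u0 u0 / 2%:R <= ip s s.
Proof.
move=> e.
have h1 := ip_ge0 (s - w).
have h2 := ip_ge0 (u0 - (P + c)).
rewrite !(ipDl, ipDr, ipNl, ipNr) in h1 h2 *.
rewrite (ipC w s) (ipC c P) (ipC (P) u0) (ipC c u0) in h1 h2 *.
rewrite (ipC w s) in e.
rewrite e in h1 h2 *.
lra.
Qed.

Lemma ip_adj m n (Y : 'M[C]_(m, n)) (w : 'cV[C]_n) (c : 'cV[C]_m) :
  ip (Y *m w) c = ip w (hmx Y *m c).
Proof. by rewrite -!hmx_ip hmxM mulmxA. Qed.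

End H.

Theorem lemma1 (R : rcfType) (N M K : nat) (hN : (0 < N)%N) (hM : (0 < M)%N)
  (hK : (0 < K)%N) (a : 'cV[complex R]_N) (B : 'M[complex R]_(N, M))
  (X0 : 'M[complex R]_N) (hX0 : is_diag_mx X0) (Y0 : 'M[complex R]_(M, K)) :
  (* joint concavity in (X, Y) over diagonal X, w.r.t. real convex combinations *)
  (forall (X1 X2 : 'M[complex R]_N) (Y1 Y2 : 'M[complex R]_(M, K)) (t : R),
     is_diag_mx X1 -> is_diag_mx X2 -> 0 <= t <= 1 ->
     t * Omega a B X1 X0 Y1 Y0 + (1 - t) * Omega a B X2 X0 Y2 Y0
     <= Omega a B ((t%:C)%C *: X1 + ((1 - t)%:C)%C *: X2) X0
                  ((t%:C)%C *: Y1 + ((1 - t)%:C)%C *: Y2) Y0)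
  /\
  (forall (X : 'M[complex R]_N) (Y : 'M[complex R]_(M, K)), is_diag_mx X ->
     Omega a B X X0 Y Y0 <= sqnorm (a^T *m X *m B *m Y)).
Proof.
split.
  move=> X1 X2 Y1 Y2 t d1 d2 ht.
  rewrite /Omega; cbv zeta.
  rewrite !hmx_ip !sqnorm_ip diagv_comb conjm_comb.
  rewrite !mulmxDl !mulmxDr -!scalemxAl -!scalemxAr.
  exact: key.
move=> X Y dX.
rewrite -(sqnorm_hmx (a^T *m X *m B *m Y)) (hmxM (a^T *m X *m B)) (hmxM (a^T *m X)) hmx_aX // !mulmxA.
rewrite /Omega; cbv zeta.
rewrite !hmx_ip !sqnorm_ip.
apply: key2.
by rewrite -(mulmxA Y) ip_adj !mulmxA.
Qed.
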